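(* Let $n,m,\ell$ be integers with $n-1\ge m\ge \ell\ge 0$. Then $$\mathfrak Z_n(2^{\{m\}})\,\mathfrak Z_n((-1)^{\{\ell\}})=\mathcal Y_n\big(2^{\{m-\ell\}},1^{\{\ell\}}\big)+\Big(\prod_{r=1}^{n-1}(1-\zeta_n^r)\Big)\sum_{j=0}^{n-m-2}\mathcal Y_n\big(3^{\{m-\ell+1+j\}},2^{\{\ell-1-j\}},1^{\{n-m-2-j\}}\big).$$
   Context: Let $\zeta_n=e^{2\pi\sqrt{-1}/n}$. For integers $s_1,\dots,s_m$ (negative values allowed), define $\mathfrak Z_n(s_1,\dots,s_m):=\sum_{1\le i_1<\cdots<i_m\le n-1}\prod_{k=1}^{m}(1-\zeta_n^{i_k})^{-s_k}$ (equal to $1$ if $m=0$ and to $0$ if $m>n-1$). Define $\mathcal Y_n(s_1,\dots,s_m):=\sum_{\sigma}\mathfrak Z_n(\sigma)$, where $\sigma$ runs over all distinct rearrangements of $(s_1,\dots,s_m)$; $\mathcal Y_n$ of the empty sequence is $1$. Notation: $a^{\{k\}}$ denotes the block $a,\dots,a$ of length $k$; any $\mathcal Y_n$ term in which some block has negative length is interpreted as $0$. *)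

(* Defs.v *)
From mathcomp Require Import all_boot all_order all_algebra.
From mathcomp Require Import complex.
From mathcomp Require Import reals trigo.
Set Implicit Arguments. Unset Strict Implicit. Unset Printing Implicit Defensive.
Import Order.TTheory GRing.Theory Num.Theory.
Local Open Scope ring_scope.
Local Open Scope complex_scope.

Section Defs.
Variable R : realType.

Definition zeta (n : nat) : R[i] :=
  (cos (2 * pi / n%:R) +i* sin (2 * pi / n%:R))%C.

Definition Zfrak (n : nat) (s : seq int) : R[i] :=
  \sum_(t : (size s).-tuple 'I_n |
        sorted ltn (map val t) && all (fun i : 'I_n => 0 < val i)%N t)
    \prod_(k < size s) (1 - zeta n ^+ (val (tnth t k))) ^ (- nth 0 s k).

(* \mathcal Y_n(s) = sum of Zfrak over all distinct rearrangements of s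
   (permutations s is duplicate-free). *)
Definition Ycal (n : nat) (s : seq int) : R[i] :=
  \sum_(sg <- permutations s) Zfrak n sg.

End Defs.

(* Main.v *)
Require Import Defs.
From mathcomp Require Import all_boot all_order all_algebra.
From mathcomp Require Import complex ring lra.
From mathcomp Require Import reals trigo.
From mathcomp Require Import zify.
Import Order.TTheory GRing.Theory Num.Theory.
Set Implicit Arguments. Unset Strict Implicit. Unset Printing Implicit Defensive.
Local Open Scope ring_scope.
Lemma sum_count (T : eqType) (r : seq T) (P : pred T) :
  (\sum_(x <- r) (P x : nat) = count P r)%N.
Proof. by elim: r => [|x r IH]; rewrite ?big_nil ?big_cons ?IH. Qed.

Lemma count_enum_ord n (P : pred 'I_n) :
  count P (enum 'I_n) = (\sum_(i < n) (P i : nat))%N.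
Proof. by rewrite -sum_count enumT. Qed.

Definition c0 : 'I_5 := @Ordinal 5 0 isT.
Definition cN : 'I_5 := @Ordinal 5 1 isT.
Definition c1 : 'I_5 := @Ordinal 5 2 isT.
Definition c2 : 'I_5 := @Ordinal 5 3 isT.
Definition c3 : 'I_5 := @Ordinal 5 4 isT.

Definition vo (c : 'I_5) : int := nth 0 [:: 0; -1; 1; 2; 3] c.
Definition vinv (v : int) : 'I_5 :=
  if v == -1 then cN else if v == 1 then c1 else if v == 2 then c2
  else if v == 3 then c3 else c0.

Lemma ord5_cases (c : 'I_5) : c = c0 \/ c = cN \/ c = c1 \/ c = c2 \/ c = c3.
Proof.
case: c => [[|[|[|[|[|?]]]]] Hc] //;
  [left|right;left|right;right;left|do 3 right; left|do 4 right]; exact: val_inj.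
Qed.

Lemma voK : cancel vo vinv.
Proof. by move=> c; case: (ord5_cases c) => [->|[->|[->|[->|->]]]]. Qed.

Lemma vo_inj : injective vo. Proof. exact: can_inj voK. Qed.

Lemma vinvK v : v \in [:: -1; 1; 2; 3] -> vo (vinv v) = v.
Proof. by rewrite !inE => /or4P[] /eqP ->. Qed.

Lemma vinv_neq0 v : v \in [:: -1; 1; 2; 3] -> vinv v != c0.
Proof. by rewrite !inE => /or4P[] /eqP ->. Qed.

Section Gen.
Variable (C : fieldType) (w : nat -> C).

Definition ZN n N (sg : seq int) : C :=
  \sum_(t : N.-tuple 'I_n |
        sorted ltn (map val t) && all (fun i : 'I_n => 0 < val i)%N t)
    \prod_(k < N) w (val (tnth t k)) ^ (- nth 0 sg k).

Definition ZG n (s : seq int) := ZN n (size s) s.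
Definition YG n s := \sum_(sg <- permutations s) ZG n sg.

Definition cnt n (e : {ffun 'I_n -> 'I_5}) c := (\sum_(i < n) (e i == c : nat))%N.
Definition WT n (e : {ffun 'I_n -> 'I_5}) := \prod_(i < n) w i.+1 ^ (- vo (e i)).
Definition good n (e : {ffun 'I_n -> 'I_5}) (s : seq int) :=
  [&& cnt e cN == count_mem (-1) s, cnt e c1 == count_mem 1 s,
      cnt e c2 == count_mem 2 s & cnt e c3 == count_mem 3 s].

Definition hf n N (u : N.-tuple 'I_5) (t : N.-tuple 'I_n.+1) : {ffun 'I_n -> 'I_5} :=
  [ffun i => if lift ord0 i \in t then nth c0 u (index (lift ord0 i) t) else c0].

Lemma big_hf (R : Type) (idx : R) (op : Monoid.com_law idx) n N
   (u : N.-tuple 'I_5) (t : N.-tuple 'I_n.+1) (F : 'I_n.+1 -> 'I_5 -> R) :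
  (forall x, F x c0 = idx) -> uniq t -> ord0 \notin t ->
  \big[op/idx]_(i < n) F (lift ord0 i) (hf u t i) =
  \big[op/idx]_(k < N) F (tnth t k) (tnth u k).
Proof.
move=> F0 ut t0.
pose G x := if x \in t then nth c0 u (index x t) else c0.
have -> : \big[op/idx]_(i < n) F (lift ord0 i) (hf u t i) =
          \big[op/idx]_(x < n.+1) F x (G x).
  rewrite big_ord_recl /G (negbTE t0) F0 Monoid.mul1m.
  by apply: eq_bigr => i _; rewrite ffunE.
pose F' x := F x (nth c0 u (index x t)).
have -> : \big[op/idx]_(k < N) F (tnth t k) (tnth u k) =
          \big[op/idx]_(k < N) F' (tnth t k).
  apply: eq_bigr => k _; rewrite /F' {2}(tnth_nth ord0) index_uniq ?size_tuple //.
  by rewrite -!tnth_nth.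
have -> : \big[op/idx]_(k < N) F' (tnth t k) = \big[op/idx]_(x <- t) F' x.
  by rewrite big_tuple.
rewrite (big_uniq _ ut).
rewrite [RHS]big_mkcond /=; apply: eq_bigr => x _; rewrite /G /F'; case: ifP => // _; exact: F0.
Qed.
End Gen.

Section Gen2.
Variable (C : fieldType) (w : nat -> C).
Local Notation L := [:: -1; 1; 2; 3].

Lemma map_vo_vinv (s : seq int) : all (mem L) s -> map vo (map vinv s) = s.
Proof.
move=> /allP Hs; rewrite -map_comp map_id_in // => v Hv /=; exact: vinvK (Hs v Hv).
Qed.

Lemma perm_step N (s : seq int) (F : seq int -> C) :
  all (mem L) s -> size s = N ->
  \sum_(sg <- permutations s) F sg =
  \sum_(u : N.-tuple 'I_5 | perm_eq u (map vinv s)) F (map vo u).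
Proof.
move=> Hs HN.
have -> : \sum_(u : N.-tuple 'I_5 | perm_eq u (map vinv s)) F (map vo u) =
  \sum_(sg <- [seq map vo (val u) | u <- enum [pred u : N.-tuple 'I_5 | perm_eq u (map vinv s)]]) F sg.
  by rewrite big_map big_enum.
apply: perm_big; apply: uniq_perm.
- exact: permutations_uniq.
- rewrite map_inj_uniq ?enum_uniq // => u v /(inj_map vo_inj) /val_inj //.
- move=> sg; rewrite mem_permutations; apply/idP/mapP.
  + move=> psg.
    have Hsz : size (map vinv sg) == N by rewrite size_map (perm_size psg) HN.
    exists (Tuple Hsz); first by rewrite mem_enum /=; apply: perm_map.
    rewrite /= map_vo_vinv //; apply/allP => v Hv.
    by move/allP: Hs; apply; rewrite -(perm_mem psg).
  + case=> u; rewrite mem_enum /= => pu ->.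
    by rewrite -(map_vo_vinv Hs); apply: perm_map.
Qed.
End Gen2.

Section Gen3.
Variable (C : fieldType) (w : nat -> C).
Local Notation L := [:: -1; 1; 2; 3].

Definition Pt n N (t : N.-tuple 'I_n) :=
  sorted ltn (map val t) && all (fun i : 'I_n => 0 < val i)%N t.

Lemma Pt_uniq n N (t : N.-tuple 'I_n) : Pt t -> uniq t.
Proof.
case/andP=> st _; rewrite -(map_inj_uniq val_inj).
exact: (sorted_uniq ltn_trans ltnn).
Qed.

Lemma Pt_ord0 n N (t : N.-tuple 'I_n.+1) : Pt t -> ord0 \notin t.
Proof. by case/andP=> _ /allP H; apply/negP => /H. Qed.

Lemma hf_neq0 n N (u : N.-tuple 'I_5) (t : N.-tuple 'I_n.+1) i :
  c0 \notin u -> (hf u t i != c0) = (lift ord0 i \in t).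
Proof.
move=> u0; rewrite ffunE; case: ifP => H; last by rewrite eqxx.
apply/negP => /eqP E; move: u0; rewrite -E mem_nth //.
have := index_mem (lift ord0 i) t; rewrite H size_tuple => Hi.
by rewrite size_tuple.
Qed.

Lemma cnt_hf n N (u : N.-tuple 'I_5) (t : N.-tuple 'I_n.+1) c :
  Pt t -> c != c0 -> cnt (hf u t) c = count_mem c u.
Proof.
move=> Ht cc0; rewrite /cnt.
rewrite (@big_hf _ _ _ _ _ u t (fun _ c' => (c' == c : nat)));
  try (by move=> x; rewrite eq_sym (negbTE cc0)); try exact: Pt_uniq;
  try exact: Pt_ord0.
by rewrite -sum_count big_tuple.
Qed.

Lemma WT_hf n N (u : N.-tuple 'I_5) (t : N.-tuple 'I_n.+1) :
  Pt t -> WT w (hf u t) =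
    \prod_(k < N) w (val (tnth t k)) ^ (- nth 0 (map vo u) k).
Proof.
move=> Ht; rewrite /WT.
have -> : \prod_(i < n) w i.+1 ^ (- vo (hf u t i)) =
   \prod_(i < n) (fun x c => w (nat_of_ord x) ^ (- vo c)) (lift ord0 i) (hf u t i).
  by apply: eq_bigr => i _; rewrite -(lift0 i).
rewrite (@big_hf _ _ _ _ _ u t (fun x c => w (nat_of_ord x) ^ (- vo c)));
  try (by move=> x; rewrite /= oppr0 expr0z); try exact: Pt_uniq;
  try exact: Pt_ord0.
apply: eq_bigr => k _; rewrite (nth_map c0) ?size_tuple //.
by rewrite -tnth_nth.
Qed.

Lemma hf_tnth n N (u : N.-tuple 'I_5) (t : N.-tuple 'I_n.+1) j k :
  Pt t -> tnth t k = lift ord0 j -> hf u t j = tnth u k.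
Proof.
move=> Ht Ej; rewrite ffunE -Ej mem_tnth (tnth_nth ord0) index_uniq ?size_tuple //.
  by rewrite -tnth_nth.
exact: Pt_uniq.
Qed.

Lemma hf_inj n N (s : seq int) : all (mem L) s ->
  {in [pred p : N.-tuple 'I_5 * N.-tuple 'I_n.+1 | perm_eq p.1 (map vinv s) && Pt p.2] &,
     injective (fun p => hf p.1 p.2)}.
Proof.
move=> Hs [u t] [u' t'] /andP[/= pu Ht] /andP[/= pu' Ht'] /= E.
have nz : forall v : N.-tuple 'I_5, perm_eq v (map vinv s) -> c0 \notin v.
  move=> v pv; rewrite (perm_mem pv); apply/mapP => -[x xs Ex].
  by move/allP: Hs => /(_ x xs) /vinv_neq0; rewrite -Ex eqxx.
have memt : t =i t'.
  move=> x; have [->|xn0] := eqVneq x ord0.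
    by rewrite (negbTE (Pt_ord0 Ht)) (negbTE (Pt_ord0 Ht')).
  have nx : ord0 != x by rewrite eq_sym.
  have [j -> _] := unlift_some nx.
  by rewrite -(@hf_neq0 n N u t j (nz _ pu)) -(@hf_neq0 n N u' t' j (nz _ pu')) E.
have tt : t = t' :> seq _.
  apply: (@irr_sorted_eq _ (relpre val ltn)) => //.
  - by move=> ???; apply: ltn_trans.
  - by move=> ?; exact: ltnn.
  - by rewrite -sorted_map; case/andP: Ht.
  - by rewrite -sorted_map; case/andP: Ht'.
have {tt} tt : t = t' by apply: val_inj.
subst t'; congr pair; apply: eq_from_tnth => k.
have nx : ord0 != tnth t k.
  by apply/eqP => Ex; move: (Pt_ord0 Ht); rewrite Ex mem_tnth.
have [j Ej _] := unlift_some nx.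
by rewrite -(@hf_tnth n N u t j k Ht Ej) E (@hf_tnth n N u' t j k Ht Ej).
Qed.
End Gen3.

Section Gen4.
Variable (C : fieldType) (w : nat -> C).
Local Notation L := [:: -1; 1; 2; 3].

Lemma count_vinv (s : seq int) c : all (mem L) s ->
  count_mem c (map vinv s) = count_mem (vo c) s.
Proof.
move=> /allP Hs; rewrite count_map; apply: eq_in_count => v /Hs vL /=.
by rewrite -(inj_eq vo_inj) vinvK.
Qed.

Lemma size_L (s : seq int) : all (mem L) s ->
  size s = (count_mem (-1)%R s + count_mem 1%R s + count_mem 2%R s + count_mem 3%R s)%N.
Proof.
elim: s => //= x s IH /andP[Hx Hs]; rewrite IH //.
move: Hx; rewrite !inE => /or4P[] /eqP -> /=; rewrite !add0n ?add1n ?addSn ?addnS //.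
Qed.

Lemma neq0_split (x : 'I_5) :
  ((x != c0) : nat) = ((x == cN) + (x == c1) + (x == c2) + (x == c3))%N.
Proof. by case: (ord5_cases x) => [->|[->|[->|[->|->]]]]. Qed.

Lemma good_hf n N (s : seq int) (u : N.-tuple 'I_5) (t : N.-tuple 'I_n.+1) :
  all (mem L) s -> perm_eq u (map vinv s) -> Pt t -> good (hf u t) s.
Proof.
move=> Hs pu Ht.
have E c : c != c0 -> cnt (hf u t) c = count_mem (vo c) s.
  by move=> cc0; rewrite cnt_hf // (permP pu) count_vinv.
by rewrite /good !E // /vo /= !eqxx.
Qed.

Lemma hf_surj n N (s : seq int) (e : {ffun 'I_n -> 'I_5}) :
  all (mem L) s -> size s = N -> good e s ->
  exists2 p : N.-tuple 'I_5 * N.-tuple 'I_n.+1,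
    perm_eq p.1 (map vinv s) && Pt p.2 & e = hf p.1 p.2.
Proof.
move=> Hs HN /and4P[/eqP gN /eqP g1 /eqP g2 /eqP g3].
pose r := [seq i <- enum 'I_n | e i != c0].
have Hr : size r = N.
  rewrite size_filter count_enum_ord -HN size_L //.
  rewrite -gN -g1 -g2 -g3 /cnt -!big_split /=.
  by apply: eq_bigr => i _; rewrite neq0_split.
have Hts : size (map (lift ord0) r) == N by rewrite size_map Hr.
have Hus : size (map e r) == N by rewrite size_map Hr.
exists (Tuple Hus, Tuple Hts) => /=.
  apply/andP; split.
    rewrite /perm_eq; apply/allP => c _; apply/eqP.
    rewrite count_vinv // count_map count_filter count_enum_ord.
    case: (ord5_cases c) => [->|[->|[->|[->|->]]]].
    + rewrite big1 => [|i _]; last by rewrite /= andbN.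
      apply/esym/count_memPn/negP => H; move/allP: Hs => /(_ _ H).
      by [].
    + by rewrite -gN; apply: eq_bigr => i _ /=; case: eqP => // ->.
    + by rewrite -g1; apply: eq_bigr => i _ /=; case: eqP => // ->.
    + by rewrite -g2; apply: eq_bigr => i _ /=; case: eqP => // ->.
    + by rewrite -g3; apply: eq_bigr => i _ /=; case: eqP => // ->.
  apply/andP; split.
    have sr : sorted ltn (map val r).
      rewrite sorted_map; apply: sorted_filter; first by move=> ???; apply: ltn_trans.
      by rewrite -sorted_map val_enum_ord iota_ltn_sorted.
    rewrite /= -map_comp (@eq_map _ _ _ (succn \o val)); last by move=> i /=; rewrite -(lift0 i).
    rewrite map_comp; apply: (@homo_sorted _ _ succn ltn ltn) => // x y.
  by apply/allP => x /mapP [i _ ->]; exact: ltn0Sn.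
apply/ffunP => i; rewrite ffunE /= (mem_map (@lift_inj _ ord0)).
rewrite mem_filter mem_enum andbT.
case: (eqVneq (e i) c0) => [-> //|Ei].
have ir : i \in r by rewrite mem_filter mem_enum andbT.
rewrite (index_map (@lift_inj _ ord0)) (nth_map i) ?index_mem //.
by rewrite nth_index.
Qed.
End Gen4.

Section Gen5.
Variable (C : fieldType) (w : nat -> C).
Local Notation L := [:: -1; 1; 2; 3].

Lemma ycalE n (s : seq int) : all (mem L) s ->
  YG w n.+1 s = \sum_(e : {ffun 'I_n -> 'I_5} | good e s) WT w e.
Proof.
move=> Hs; pose N := size s.
rewrite /YG (eq_big_seq (fun sg => ZN w n.+1 N sg)); last first.
  by move=> sg; rewrite mem_permutations /ZG => /perm_size ->.
rewrite (@perm_step C N s (fun sg => ZN w n.+1 N sg) Hs erefl) /ZN pair_big_dep /=.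
pose A := [pred p : N.-tuple 'I_5 * N.-tuple 'I_n.+1 | perm_eq p.1 (map vinv s) && Pt p.2].
have -> : \sum_(e : {ffun 'I_n -> 'I_5} | good e s) WT w e =
          \sum_(e in [set hf p.1 p.2 | p in A]) WT w e.
  apply: eq_bigl => e; apply/idP/imsetP.
  - by move=> ge; have [p pA ->] := @hf_surj n N s e Hs erefl ge; exists p.
  - by case=> p /andP[pu Ht] ->; apply: good_hf.
rewrite big_imset /=; last exact: hf_inj.
apply: eq_big => p //; move=> /andP[_ Ht].
by rewrite WT_hf.
Qed.
End Gen5.

Section Helpers.
Variable (C : fieldType) (w : nat -> C).

Lemma YG_nseq n m (x : int) : YG w n (nseq m x) = ZG w n (nseq m x).
Proof.
rewrite /YG (perm_big [:: nseq m x]) ?big_seq1 //.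
apply: uniq_perm => //; first exact: permutations_uniq.
move=> t; rewrite mem_permutations inE; apply/idP/eqP => [pt|->]; last exact: perm_refl.
have st : size t = m by rewrite (perm_size pt) size_nseq.
rewrite -st; apply/all_pred1P/allP => y yt.
by move: yt; rewrite (perm_mem pt) mem_nseq => /andP[_].
Qed.

Lemma cnt0P n (e : {ffun 'I_n -> 'I_5}) c : cnt e c = 0%N -> forall i, e i != c.
Proof.
move=> /eqP; rewrite /cnt sum_nat_eq0 => /forallP H i.
by have := H i; rewrite eqb0.
Qed.

Lemma cnt_total n (e : {ffun 'I_n -> 'I_5}) :
  (cnt e c0 + cnt e cN + cnt e c1 + cnt e c2 + cnt e c3)%N = n.
Proof.
rewrite /cnt -!big_split /= -[RHS]card_ord -sum1_card.
by apply: eq_big => [//|i _]; case: (ord5_cases (e i)) => [->|[->|[->|[->|->]]]].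
Qed.

Lemma sum_swap_cond (f : nat -> C) a b :
  \sum_(j < a) (if (j < b)%N then f j else 0) =
  \sum_(j < b) (if (j < a)%N then f j else 0).
Proof.
rewrite (big_ord_widen (a + b) (fun j => if (j < b)%N then f j else 0)) ?leq_addr //.
rewrite (big_ord_widen (a + b) (fun j => if (j < a)%N then f j else 0)) ?leq_addl //.
rewrite [LHS]big_mkcond [RHS]big_mkcond /=; apply: eq_bigr => j _.
by case: (j < a)%N; case: (j < b)%N.
Qed.

Lemma count_nseq_int a (x v : int) : count_mem v (nseq a x) = ((x == v) * a)%N.
Proof. by rewrite count_nseq. Qed.

End Helpers.

Ltac pcase x := case: (ord5_cases x) => [->|[->|[->|[->|->]]]].

Section Main.
Variable (C : fieldType) (w : nat -> C).
Local Notation L := [:: -1; 1; 2; 3].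

Definition comb (a b : 'I_5) : 'I_5 :=
  if a == c2 then (if b == cN then c1 else c2) else (if b == cN then cN else c0).
Definition up (a : 'I_5) : 'I_5 :=
  if a == cN then c0 else if a == c0 then c1 else if a == c1 then c2 else c3.
Definition down (a : 'I_5) : 'I_5 :=
  if a == c0 then cN else if a == c1 then c0 else if a == c2 then c1 else c2.

Definition Qp m l n (e : {ffun 'I_n -> 'I_5}) :=
  [&& cnt e c3 == 0%N, (cnt e c2 + cnt e c1 == m)%N & (cnt e c1 + cnt e cN == l)%N].

Lemma comb_W (x : C) a b : x != 0 -> (a == c0) || (a == c2) -> (b == c0) || (b == cN) ->
  x ^ (- vo a) * x ^ (- vo b) = x ^ (- vo (comb a b)).
Proof.
move=> x0 /orP[]/eqP-> /orP[]/eqP->; rewrite -expfzDr //.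
Qed.

Lemma up_W (x : C) a : x != 0 -> a != c3 ->
  x ^ (- vo a) = x * x ^ (- vo (up a)).
Proof.
move=> x0; rewrite -{2}(expr1z x) -expfzDr //; pcase a => // _.
Qed.

End Main.

Section Main2.
Variable (C : fieldType) (w : nat -> C).
Local Notation L := [:: -1; 1; 2; 3].

Lemma good2 n m (e : {ffun 'I_n -> 'I_5}) :
  good e (nseq m 2) = [&& cnt e cN == 0%N, cnt e c1 == 0%N, cnt e c2 == m & cnt e c3 == 0%N].
Proof. by rewrite /good !count_nseq_int /= mul1n !mul0n. Qed.

Lemma goodN1 n l (e : {ffun 'I_n -> 'I_5}) :
  good e (nseq l (-1)) = [&& cnt e cN == l, cnt e c1 == 0%N, cnt e c2 == 0%N & cnt e c3 == 0%N].
Proof. by rewrite /good !count_nseq_int /= mul1n !mul0n. Qed.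

Lemma pair_step n m l : (forall i, (i < n)%N -> w i.+1 != 0) ->
  (\sum_(e : {ffun 'I_n -> 'I_5} | good e (nseq m 2)) WT w e) *
  (\sum_(e : {ffun 'I_n -> 'I_5} | good e (nseq l (-1))) WT w e) =
  \sum_(e : {ffun 'I_n -> 'I_5} | Qp m l e) WT w e.
Proof.
move=> wnz.
rewrite mulr_suml; under eq_bigr do rewrite mulr_sumr.
rewrite pair_big_dep /=.
pose A := [pred p : {ffun 'I_n -> 'I_5} * {ffun 'I_n -> 'I_5} |
             good p.1 (nseq m 2) && good p.2 (nseq l (-1))].
pose hc (p : {ffun 'I_n -> 'I_5} * {ffun 'I_n -> 'I_5}) :=
  [ffun i => comb (p.1 i) (p.2 i)].
have dom p : p \in A -> forall i, ((p.1 i == c0) || (p.1 i == c2)) &&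
                                  ((p.2 i == c0) || (p.2 i == cN)).
  rewrite inE good2 goodN1 => /andP[/and4P[/eqP a1 /eqP a2 _ /eqP a4]
                                   /and4P[_ /eqP b2 /eqP b3 /eqP b4]] i.
  move: (cnt0P a1 i) (cnt0P a2 i) (cnt0P a4 i) (cnt0P b2 i) (cnt0P b3 i) (cnt0P b4 i).
  by pcase (p.1 i); pcase (p.2 i).
have -> : \sum_(e : {ffun 'I_n -> 'I_5} | Qp m l e) WT w e =
          \sum_(e in [set hc p | p in A]) WT w e.
  apply: eq_bigl => e; apply/idP/imsetP.
  - case/and3P => /eqP e3 /eqP e21 /eqP e1N.
    pose p1 : {ffun 'I_n -> 'I_5} := [ffun i => if (e i == c2) || (e i == c1) then c2 else c0].
    pose p2 : {ffun 'I_n -> 'I_5} := [ffun i => if (e i == c1) || (e i == cN) then cN else c0].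
    exists (p1, p2).
      rewrite inE /= good2 goodN1.
      have z c : c != c2 -> c != c0 -> cnt p1 c = 0%N.
        move=> ? ?; apply/eqP; rewrite /cnt sum_nat_eq0; apply/forallP => i.
        by rewrite ffunE; case: ifP => _; rewrite eqb0 // eq_sym.
      have z' c : c != cN -> c != c0 -> cnt p2 c = 0%N.
        move=> ? ?; apply/eqP; rewrite /cnt sum_nat_eq0; apply/forallP => i.
        by rewrite ffunE; case: ifP => _; rewrite eqb0 // eq_sym.
      rewrite (z cN) // (z c1) // (z c3) // (z' c1) // (z' c2) // (z' c3) // /= !andbT.
      apply/andP; split.
        rewrite -e21 /cnt -big_split; apply/eqP/eq_bigr => i _; rewrite ffunE.
        by pcase (e i).
      rewrite -e1N /cnt -big_split; apply/eqP/eq_bigr => i _; rewrite ffunE.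
      by pcase (e i).
    apply/ffunP => i; rewrite !ffunE /=.
    by move: (cnt0P e3 i); pcase (e i).
  - case=> p pA ->; apply/and3P; split.
    + apply/eqP; rewrite /cnt; apply: big1 => i _; rewrite ffunE.
      by rewrite /comb; case: ifP => _; case: ifP.
    + move: pA; rewrite inE good2 => /andP[/and4P[_ _ /eqP <- _] _].
      rewrite /cnt -big_split; apply/eqP/eq_bigr => i _; rewrite ffunE.
      by pcase (p.1 i); pcase (p.2 i).
    + move: pA; rewrite inE goodN1 => /andP[_ /and4P[/eqP <- _ _ _]].
      rewrite /cnt -big_split; apply/eqP/eq_bigr => i _; rewrite ffunE.
      by pcase (p.1 i); pcase (p.2 i).
rewrite big_imset /=; last first.
  move=> [p1 p2] [q1 q2] pA qA /= E.
  have E' i : p1 i = q1 i /\ p2 i = q2 i.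
    have := congr1 (fun f : {ffun 'I_n -> 'I_5} => f i) E; rewrite !ffunE /=.
    move: (dom _ pA i) (dom _ qA i) => /=.
    by pcase (p1 i); pcase (p2 i); pcase (q1 i); pcase (q2 i).
  by congr pair; apply/ffunP => i; case: (E' i).
apply: eq_big => p //; move=> pA.
rewrite /WT -big_split /=; apply: eq_bigr => i _; rewrite ffunE.
by case/andP: (dom p pA i) => ? ?; apply: comb_W; [apply: wnz|..].
Qed.
End Main2.

Section Main3.
Variable (C : fieldType) (w : nat -> C).
Local Notation L := [:: -1; 1; 2; 3].

Lemma goodS n a b c (e : {ffun 'I_n -> 'I_5}) :
  good e (nseq a 3 ++ nseq b 2 ++ nseq c 1) =
  [&& cnt e cN == 0%N, cnt e c1 == c, cnt e c2 == b & cnt e c3 == a].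
Proof. by rewrite /good !count_cat !count_nseq_int /= !mul1n !mul0n !add0n !addn0. Qed.

Lemma good21 n a b (e : {ffun 'I_n -> 'I_5}) :
  good e (nseq a 2 ++ nseq b 1) =
  [&& cnt e cN == 0%N, cnt e c1 == b, cnt e c2 == a & cnt e c3 == 0%N].
Proof. by rewrite /good !count_cat !count_nseq_int /= !mul1n !mul0n !add0n !addn0. Qed.

Lemma empty_step n m l j : (m <= n)%N -> (n - m <= j)%N ->
  \sum_(e : {ffun 'I_n -> 'I_5} | Qp m l e && (cnt e cN == j.+1)) WT w e = 0.
Proof.
move=> mn jn; rewrite big_pred0 // => e; apply/negbTE/negP.
case/andP=> /and3P[_ /eqP e21 _] /eqP eN; move: (cnt_total e); lia.
Qed.

Lemma shift_step n m l j : (m <= n)%N -> (l <= m)%N -> (j < l)%N -> (j < n - m)%N ->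
  (forall i, (i < n)%N -> w i.+1 != 0) ->
  \sum_(e : {ffun 'I_n -> 'I_5} | Qp m l e && (cnt e cN == j.+1)) WT w e =
  (\prod_(i < n) w i.+1) *
  \sum_(e : {ffun 'I_n -> 'I_5} | good e (nseq (m - l + 1 + j) 3 ++ nseq (l - 1 - j) 2
                                          ++ nseq (n.+1 - m - 2 - j) 1)) WT w e.
Proof.
move=> mn lm jl jn wnz.
rewrite mulr_sumr.
pose D := [pred e : {ffun 'I_n -> 'I_5} | Qp m l e && (cnt e cN == j.+1)].
pose sg (e : {ffun 'I_n -> 'I_5}) : {ffun 'I_n -> 'I_5} := [ffun i => up (e i)].
have D3 e : e \in D -> forall i, e i != c3.
  by rewrite inE => /andP[/and3P[/eqP e3 _ _] _]; apply: cnt0P.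
have -> : \sum_(e : {ffun 'I_n -> 'I_5} | good e (nseq (m - l + 1 + j) 3 ++ nseq (l - 1 - j) 2
                                          ++ nseq (n.+1 - m - 2 - j) 1))
            (\prod_(i < n) w i.+1) * WT w e =
          \sum_(e in [set sg e | e in D]) (\prod_(i < n) w i.+1) * WT w e.
  apply: eq_bigl => e'; rewrite goodS; apply/idP/imsetP.
  - case/and4P => /eqP eN /eqP e1 /eqP e2 /eqP e3.
    pose e : {ffun 'I_n -> 'I_5} := [ffun i => down (e' i)].
    have Ec c d : (forall a, (down a == c) = (a == d)) -> cnt e c = cnt e' d.
      by move=> H; apply: eq_bigr => i _; rewrite ffunE H.
    exists e.
      rewrite inE /Qp.
      have -> : cnt e c3 = 0%N.
        by apply: big1 => i _; rewrite ffunE; pcase (e' i).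
      have -> : cnt e c2 = (cnt e' c3 + cnt e' cN)%N.
        by rewrite /cnt -big_split; apply: eq_bigr => i _; rewrite ffunE; pcase (e' i).
      rewrite (Ec c1 c2) ?(Ec cN c0); try by move=> a; pcase a.
      move: (cnt_total e'); rewrite e1 e2 e3 eN.
      move=> T; apply/andP; split; [apply/and3P; split|]; apply/eqP; lia.
    apply/ffunP => i; rewrite !ffunE.
    by move: (cnt0P eN i); pcase (e' i).
  - case=> e eD ->.
    move: (eD); rewrite inE => /andP[/and3P[/eqP e3 /eqP e21 /eqP e1N] /eqP eN].
    have Ec c d : (forall a, (up a == c) = (a == d)) -> cnt (sg e) c = cnt e d.
      by move=> H; apply: eq_bigr => i _; rewrite ffunE H.
    rewrite (Ec c1 c0) ?(Ec c2 c1); try by move=> a; pcase a.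
    have -> : cnt (sg e) cN = 0%N.
      by apply: big1 => i _; rewrite ffunE; pcase (e i).
    have -> : cnt (sg e) c3 = (cnt e c2 + cnt e c3)%N.
      by rewrite /cnt -big_split; apply: eq_bigr => i _; rewrite ffunE; pcase (e i).
    move: (cnt_total e) => T.
    apply/and4P; split; apply/eqP; lia.
rewrite big_imset /=; last first.
  move=> e1 e2 H1 H2 E; apply/ffunP => i.
  have := congr1 (fun f : {ffun 'I_n -> 'I_5} => f i) E; rewrite !ffunE.
  move: (D3 _ H1 i) (D3 _ H2 i).
  by pcase (e1 i); pcase (e2 i).
apply: eq_big => e //; move=> eD.
rewrite /WT -big_split /=; apply: eq_bigr => i _; rewrite ffunE.
by apply: up_W; [apply: wnz | apply: D3].
Qed.
End Main3.

Section Main4.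
Variable (C : fieldType) (w : nat -> C).
Local Notation L := [:: -1; 1; 2; 3].

Lemma inord_cnt n m l (e : {ffun 'I_n -> 'I_5}) (j : 'I_l.+1) :
  Qp m l e -> (inord (cnt e cN) == j) = (cnt e cN == j).
Proof.
case/and3P=> _ _ /eqP H; rewrite -(inj_eq val_inj) /= inordK //; lia.
Qed.

Theorem main_gen n m l : (m <= n)%N -> (l <= m)%N -> (forall i, (i < n)%N -> w i.+1 != 0) ->
  ZG w n.+1 (nseq m 2) * ZG w n.+1 (nseq l (-1)) =
  YG w n.+1 (nseq (m - l) 2 ++ nseq l 1) +
  (\prod_(1 <= r < n.+1) w r) *
    \sum_(0 <= j < n.+1 - m - 1)
      (if (j < l)%N then YG w n.+1 (nseq (m - l + 1 + j) 3 ++ nseq (l - 1 - j) 2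
                                     ++ nseq (n.+1 - m - 2 - j) 1) else 0).
Proof.
move=> mn lm wnz.
have allL a b c : all (mem L) (nseq a 3 ++ nseq b 2 ++ nseq c 1).
  by rewrite !all_cat !all_nseq !inE !eqxx !orbT.
have allL2 a b : all (mem L) (nseq a 2 ++ nseq b 1).
  by rewrite !all_cat !all_nseq !inE !eqxx !orbT.
rewrite -!YG_nseq !ycalE ?all_nseq ?inE ?eqxx ?orbT // pair_step //.
rewrite (partition_big (fun e => inord (cnt e cN) : 'I_l.+1) xpredT) //= big_ord_recl /=.
congr (_ + _).
  apply: eq_bigl => e; rewrite good21.
  case Qe: (Qp m l e); last first.
    apply/esym/negbTE/negP => /and4P[/eqP eN /eqP e1 /eqP e2 /eqP e3].
    by move: Qe; rewrite /Qp e3 e2 e1 eN subnK // addn0 !eqxx.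
  rewrite /= (inord_cnt _ Qe) /=.
  case/and3P: Qe => /eqP e3 /eqP e21 /eqP e1N.
  apply/eqP/and4P => [eN|[/eqP eN _ _ _]] //.
  by split; apply/eqP; lia.
rewrite big_add1 /= big_mkord big_mkord.
have -> : (n.+1 - m - 1 = n - m)%N by lia.
rewrite mulr_sumr.
under [RHS]eq_bigr do rewrite (fun_if (fun x => (\prod_(i < n) w i.+1) * x)) mulr0.
rewrite (sum_swap_cond (fun j => (\prod_(i < n) w i.+1) *
           YG w n.+1 (nseq (m - l + 1 + j) 3 ++ nseq (l - 1 - j) 2
                                     ++ nseq (n.+1 - m - 2 - j) 1)) (n - m) l).
apply: eq_bigr => j _.
have -> : \sum_(e : {ffun 'I_n -> 'I_5} | Qp m l e && (inord (cnt e cN) == lift ord0 j)) WT w e =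
          \sum_(e : {ffun 'I_n -> 'I_5} | Qp m l e && (cnt e cN == j.+1)) WT w e.
  apply: eq_bigl => e; case Qe: (Qp m l e) => //=.
  by rewrite (inord_cnt _ Qe) lift0.
case: ltnP => jn.
  by rewrite shift_step // ycalE.
by rewrite empty_step.
Qed.
End Main4.

Section Trig.
Variable R : realType.
Local Open Scope complex_scope.

Lemma zetaX (n k : nat) : zeta R n ^+ k =
  (cos ((2 * pi / n%:R) *+ k) +i* sin ((2 * pi / n%:R) *+ k))%C.
Proof.
rewrite /zeta; set t := 2 * pi / n%:R.
elim: k => [|k IH]; first by rewrite expr0 !mulr0n cos0 sin0.
rewrite exprS IH (mulrSr t) cosD sinD.
apply/eqP; rewrite eq_complex /=; apply/andP; split; apply/eqP.
  by rewrite [cos (t *+ k) * _]mulrC [sin (t *+ k) * _]mulrC.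
by rewrite addrC [cos (t *+ k) * _]mulrC [sin (t *+ k) * _]mulrC addrC.
Qed.

Lemma zetaX_neq1 (n k : nat) : (0 < k < n)%N -> 1 - zeta R n ^+ k != 0.
Proof.
move=> /andP[k0 kn]; rewrite subr_eq0 eq_sym zetaX.
set x := (2 * pi / n%:R) *+ k.
have n0 : (0 < n)%N by apply: leq_ltn_trans kn.
have nR : n%:R != 0 :> R by rewrite pnatr_eq0 -lt0n.
have xE : x = (pi *+ 2) * (k%:R / n%:R).
  by rewrite /x -mulr_natr mulr2n; field.
have x0 : 0 < x.
  by rewrite xE mulr_gt0 // ?divr_gt0 ?ltr0n // pmulrn_lgt0 // pi_gt0.
have x2 : x < pi *+ 2.
  have p2 : 0 < pi *+ 2 :> R by rewrite pmulrn_lgt0 // pi_gt0.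
  rewrite xE gtr_pMr // ltr_pdivrMr ?ltr0n // mul1r ltr_nat //.
apply/negP => /eqP [c1 s0].
have [xp|xp|xp] := ltgtP x pi.
- by have := @sin_gt0_pi _ x; rewrite x0 xp s0 ltxx => /(_ isT).
- have : 0 < sin (x - pi).
    apply: sin_gt0_pi; rewrite subr_gt0 xp /= ltrBlDr.
    by move: x2; rewrite mulr2n.
  have := sinDpi (x - pi); rewrite subrK s0 => /esym/eqP.
  by rewrite oppr_eq0 => /eqP ->; rewrite ltxx.
- by move: c1; rewrite xp cospi; lra.
Qed.
End Trig.

Theorem proposition2 (R : realType) (n m l : nat) (hmn : (m < n)%N) (hlm : (l <= m)%N) :
  Zfrak R n (nseq m (2 : int)) * Zfrak R n (nseq l (-1 : int)) =
  Ycal R n (nseq (m - l) (2 : int) ++ nseq l (1 : int))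
  + (\prod_(1 <= r < n) (1 - zeta R n ^+ r))
    * \sum_(0 <= j < n - m - 1)
        (if (j < l)%N then
           Ycal R n (nseq (m - l + 1 + j) (3 : int) ++ nseq (l - 1 - j) (2 : int)
                     ++ nseq (n - m - 2 - j) (1 : int))
         else 0).
Proof.
case: n hmn => [//|n] hmn.
apply: (@main_gen _ (fun i => 1 - zeta R n.+1 ^+ i) n m l) => //.
move=> i ni; apply: zetaX_neq1; apply/andP; split => //.
Qed.
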